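(* Let $\tilde L$ be a minimum-size counterexample. Then for every doubly irreducible element $x$ of $\tilde L$ there exists a doubly reducible element $y$ of $\tilde L$ with $x<y$.
   Context: For a poset $P$, $x$ upper covers $y$ (and $y$ lower covers $x$) if $y<x$ with nothing strictly between. Join-irreducible: upper covers exactly one element; meet-irreducible: lower covers exactly one element; doubly irreducible: both. Join-reducible: upper covers more than one element; meet-reducible: lower covers more than one element; doubly reducible: both. For $x\in P$, ${\uparrow}x=\{y: x\le y\}$. A counterexample is a finite lattice $L$ with $|L|>1$ in which every join-irreducible $j$ satisfies $|{\uparrow}j|>|L|/2$; a minimum-size counterexample is a counterexample $\tilde L$ such that no counterexample has fewer elements. *)

(* Defs.v *)
From HB Require Import structures.
From mathcomp Require Import all_boot all_order.
Set Implicit Arguments. Unset Strict Implicit. Unset Printing Implicit Defensive.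
Import Order.TTheory.
Local Open Scope order_scope.

Section Defs.
Context {d : Order.disp_t} {P : finPOrderType d}.

Definition ucovers (x y : P) : bool :=
  (y < x) && [forall z : P, ~~ ((y < z) && (z < x))].

Definition join_irr (x : P) : bool := #|[set y | ucovers x y]| == 1%N.
Definition meet_irr (x : P) : bool := #|[set y | ucovers y x]| == 1%N.
Definition doubly_irr (x : P) : bool := join_irr x && meet_irr x.

Definition join_red (x : P) : bool := (1 < #|[set y | ucovers x y]|)%N.
Definition meet_red (x : P) : bool := (1 < #|[set y | ucovers y x]|)%N.
Definition doubly_red (x : P) : bool := join_red x && meet_red x.

Definition upset (x : P) : {set P} := [set y | x <= y].
End Defs.

Definition counterexample {d : Order.disp_t} (L : finLatticeType d) : Prop :=
  (1 < #|L|)%N /\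
  forall j : L, join_irr j -> (#|L| < 2 * #|upset j|)%N.

Definition min_counterexample {d : Order.disp_t} (L : finLatticeType d) : Prop :=
  counterexample L /\
  forall (d' : Order.disp_t) (L' : finLatticeType d'),
    counterexample L' -> (#|L| <= #|L'|)%N.

(* Main.v *)
Require Import Defs.
From HB Require Import structures.
From mathcomp Require Import all_boot all_order.
From mathcomp Require Import zify.
Set Implicit Arguments. Unset Strict Implicit. Unset Printing Implicit Defensive.
Import Order.TTheory.
Local Open Scope order_scope.
Section Gen.
Context {d : Order.disp_t} {L : finLatticeType d}.
Implicit Types x y z u v w : L.

Lemma ucoversP y z : ucovers y z -> z < y /\ (forall w, z < w -> w < y -> False).
Proof.
case/andP=> lt /forallP h; split=> // w h1 h2.
by have := h w; rewrite h1 h2.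
Qed.

Lemma ucoversI y z : z < y -> (forall w, z < w -> w < y -> False) -> ucovers y z.
Proof.
move=> lt h; apply/andP; split=> //; apply/forallP=> w.
by apply/negP=> /andP[h1 h2]; exact: h w h1 h2.
Qed.

Lemma wf_lt (P : L -> Prop) : (forall x, (forall y, y < x -> P y) -> P x) -> forall x, P x.
Proof.
move=> H.
suff: forall n x, leq #|[set y | y < x]| n -> P x by move=> h x; exact: h _ x (leqnn _).
elim=> [|n IH] x hx; apply: H => y yx.
  have: y \in [set y | y < x] by rewrite inE.
  by move=> hy; move: hx; rewrite leqn0 cards_eq0 => /eqP e; rewrite e in_set0 in hy.
apply: IH; rewrite -ltnS; apply: leq_trans hx; apply: proper_card.
apply/properP; split.
  by apply/subsetP=> z; rewrite !inE => zy; apply: lt_trans zy yx.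
by exists y; rewrite !inE ?ltxx.
Qed.

Lemma wf_gt (P : L -> Prop) : (forall x, (forall y, x < y -> P y) -> P x) -> forall x, P x.
Proof.
move=> H.
suff: forall n x, leq #|[set y | x < y]| n -> P x by move=> h x; exact: h _ x (leqnn _).
elim=> [|n IH] x hx; apply: H => y yx.
  have: y \in [set y | x < y] by rewrite inE.
  by move=> hy; move: hx; rewrite leqn0 cards_eq0 => /eqP e; rewrite e in_set0 in hy.
apply: IH; rewrite -ltnS; apply: leq_trans hx; apply: proper_card.
apply/properP; split.
  by apply/subsetP=> z; rewrite !inE => zy; apply: lt_trans yx zy.
by exists y; rewrite !inE ?ltxx.
Qed.

Lemma cover_up u v : u < v -> exists c, ucovers c u /\ c <= v.
Proof.
elim/wf_lt: v => v IH uv.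
case: (boolP [forall z, ~~ ((u < z) && (z < v))]) => h.
  by exists v; split=> //; apply/andP.
move/forallPn: h => [z]; rewrite negbK => /andP[uz zv].
have [c [h1 h2]] := IH z zv uz; exists c; split=> //.
exact: le_trans h2 (ltW zv).
Qed.

Lemma cover_down u v : u < v -> exists c, ucovers v c /\ u <= c.
Proof.
elim/wf_gt: u => u IH uv.
case: (boolP [forall z, ~~ ((u < z) && (z < v))]) => h.
  by exists u; split=> //; apply/andP.
move/forallPn: h => [z]; rewrite negbK => /andP[uz zv].
have [c [h1 h2]] := IH z uz zv; exists c; split=> //.
exact: le_trans (ltW uz) h2.
Qed.

Lemma meet_irr_lt z u v : meet_irr z -> z < u -> z < v -> z < u `&` v.
Proof.
move=> /cards1P[c hc] zu zv.
have [c1 [h1 h2]] := cover_up zu.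
have [c2 [h3 h4]] := cover_up zv.
have : c1 \in [set y | ucovers y z] by rewrite inE.
have : c2 \in [set y | ucovers y z] by rewrite inE.
rewrite hc !inE => /eqP e2 /eqP e1; subst c1 c2.
have [zc _] := ucoversP h1.
by apply: lt_le_trans zc _; rewrite lexI h2 h4.
Qed.

Lemma minimal (Q : pred L) x : Q x -> exists y, [/\ Q y, y <= x & forall z, z < y -> ~~ Q z].
Proof.
elim/wf_lt: x => x IH Qx.
case: (boolP [exists z, (z < x) && Q z]) => [/existsP[z /andP[zx Qz]]|h].
  have [y [h1 h2 h3]] := IH z zx Qz; exists y; split=> //.
  exact: le_trans h2 (ltW zx).
exists x; split=> // z zx; apply/negP=> Qz; move/negP: h; apply.
by apply/existsP; exists z; rewrite zx.
Qed.

Lemma maximal x : exists m, x <= m /\ forall z, ~~ (m < z).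
Proof.
elim/wf_gt: x => x IH.
case: (boolP [exists z, x < z]) => [/existsP[z xz]|h].
  have [m [h1 h2]] := IH z xz; exists m; split=> //; exact: le_trans (ltW xz) h1.
exists x; split=> // z; apply/negP=> xz; move/negP: h; apply.
by apply/existsP; exists z.
Qed.

Lemma cover_cases j u z : ucovers j u -> u <= z -> z <= j -> z = u \/ z = j.
Proof.
move=> /ucoversP[uj h] uz zj.
case: (eqVneq z u) => [->|zu]; first by left.
case: (eqVneq z j) => [->|zj']; first by right.
exfalso; apply: (h z); rewrite lt_neqAle ?uz ?zj ?andbT //.
by rewrite eq_sym.
Qed.

End Gen.
Section Sub.
Variables (d : Order.disp_t) (L : finLatticeType d) (S : {set L}) (y0 : L).
Hypothesis Hm : forall u v, u \notin S -> v \notin S -> u `&` v \notin S.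
Hypothesis Hy : y0 \notin S.
Hypothesis Hj : forall s, s \in S -> s <= y0 /\ (forall w, w \notin S -> s <= w -> y0 <= w).

Definition ST : Type := let _ := (y0, Hm, Hy, Hj) in {u : L | u \notin S}.
HB.instance Definition _ := Finite.copy ST {u : L | u \notin S}.
HB.instance Definition _ := SubType.copy ST {u : L | u \notin S}.
HB.instance Definition _ := [SubChoice_isSubPOrder of ST by <: with d].

Definition smeet (u v : ST) : ST := exist _ (val u `&` val v) (Hm (valP u) (valP v)).
Definition sjoin (u v : ST) : ST :=
  odflt (exist _ y0 Hy) (insub (val u `|` val v)).

Lemma smeetP (x y z : ST) : (x <= smeet y z) = (x <= y) && (x <= z).
Proof. by rewrite !leEsub /= lexI. Qed.

Lemma sjoinP (x y z : ST) : (sjoin x y <= z) = (x <= z) && (y <= z).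
Proof.
rewrite !leEsub /sjoin; case: insubP => [w hw ->|h] /=; first by rewrite leUx.
move/negPn: h => h; have [h1 h2] := Hj h.
apply/idP/andP => [le|[a b]].
  have := le_trans h1 le; rewrite leUx => /andP[] -> ->; done.
apply: h2; first exact: (valP z).
by rewrite leUx a b.
Qed.

HB.instance Definition _ := Order.POrder_MeetJoin_isLattice.Build d ST smeetP sjoinP.


Lemma card_ST : #|(ST : finType)| = #|[set w : L | w \notin S]|.
Proof.
rewrite -cardsT -(card_imset _ val_inj); apply: eq_card => w; rewrite inE; apply/imsetP/idP => [[u _ ->]|h]; first exact: (valP u).
by exists (exist _ w h).
Qed.

Lemma upset_ST (j : ST) : #|upset j| = #|[set w : L | (val j <= w) && (w \notin S)]|.
Proof.
rewrite -(card_imset _ val_inj); apply: eq_card => w; rewrite inE; apply/imsetP/andP => [[u]|[h1 h2]].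
  by rewrite inE leEsub => h ->; split=> //; exact: (valP u).
by exists (exist _ w h2); rewrite // inE leEsub.
Qed.

Lemma cov_val (j u : ST) : ucovers (val j) (val u) -> ucovers j u.
Proof.
case/andP=> lt /forallP h; apply/andP; split; first by rewrite ltEsub.
by apply/forallP=> z; rewrite !ltEsub; exact: h.
Qed.

Lemma join_irr_val (j : ST) :
  (forall u : L, ucovers (val j) u -> u \notin S) ->
  (forall u : ST, ucovers j u -> ucovers (val j) (val u)) ->
  join_irr j -> join_irr (val j).
Proof.
move=> H1 H2; rewrite /join_irr.
suff -> : [set u : L | ucovers (val j) u] = val @: [set u : ST | ucovers j u].
  by rewrite card_imset //; exact: val_inj.
apply/setP=> u; rewrite inE; apply/idP/imsetP.
  move=> h; exists (exist _ u (H1 u h)) => //.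
  by rewrite inE; apply: cov_val.
by case=> w; rewrite inE => /H2 h ->.
Qed.

End Sub.
Theorem corollary2p8 (d : Order.disp_t) (L : finLatticeType d) :
  min_counterexample L ->
  forall x : L, doubly_irr x -> exists y : L, doubly_red y /\ x < y.
Proof.
move=> [[n1 Hcex] Hmin] x /andP[jx mx].
case: (boolP [exists y, doubly_red y && (x < y)]) => [/existsP[y /andP[h1 h2]]|H].
  by exists y.
exfalso.
have H' : forall y, x < y -> ~~ doubly_red y.
  by move=> y xy; move/existsPn: H => /(_ y); rewrite xy andbT.
pose Q := fun y : L => (x <= y) && ~~ meet_irr y.
have [m [xm mtop]] := maximal x.
have Qm : Q m.
  rewrite /Q xm /= /meet_irr.
  suff -> : [set y | ucovers y m] = set0 by rewrite cards0.
  apply/setP=> y; rewrite inE in_set0; apply/negP=> /ucoversP[my _].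
  by move/negP: (mtop y).
have [y0 [Qy0 _ miny0]] := minimal Qm.
move: (Qy0) => /andP[xy0' ny0].
have A : forall w, Q w -> y0 <= w.
  move=> w Qw; move: (Qw) => /andP[xw nw].
  case: (eqVneq (y0 `&` w) y0) => [e|ne]; first by rewrite -e leIr.
  have lt1 : y0 `&` w < y0 by rewrite lt_neqAle ne leIl.
  have Qm' : ~~ Q (y0 `&` w) := miny0 _ lt1.
  have mi : meet_irr (y0 `&` w).
    by move: Qm'; rewrite /Q lexI xy0' xw /= negbK.
  case: (eqVneq (y0 `&` w) w) => [e|ne2].
    by move: (miny0 w); rewrite -{1}e lt1 Qw => /(_ isT).
  have lt2 : y0 `&` w < w by rewrite lt_neqAle ne2 leIr.
  by have := meet_irr_lt mi lt1 lt2; rewrite ltxx.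
pose S := [set u | (x <= u) && ~~ (y0 <= u)].
have xy0 : x < y0.
  rewrite lt_neqAle xy0' andbT; apply/eqP=> e; move: ny0; by rewrite -e mx.
have B : forall u, u \in S -> meet_irr u.
  move=> u; rewrite inE => /andP[xu nu]; apply/negPn/negP => h.
  by move/negP: nu; apply; apply: A; rewrite /Q xu h.
have C : forall u, u \in S -> u < y0.
  move=> u uS; move: (uS); rewrite inE => /andP[xu nu].
  have wS : u `&` y0 \in S.
    rewrite inE lexI xu xy0' /=; apply/negP => h; move/negP: nu; apply.
    exact: le_trans h (leIl _ _).
  case: (eqVneq (u `&` y0) u) => [e|ne].
    have uy : u <= y0 by rewrite -e leIr.
    by rewrite lt_neqAle uy andbT; apply: contraNneq nu => ->.
  have lt1 : u `&` y0 < u by rewrite lt_neqAle ne leIl.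
  have lt2 : u `&` y0 < y0.
    rewrite lt_neqAle leIr andbT; apply/eqP=> e2; move/negP: nu; apply.
    by rewrite -e2 leIl.
  by have := meet_irr_lt (B _ wS) lt1 lt2; rewrite ltxx.
have [a ha] := cards1P jx.
have xa : ucovers x a.
  have : a \in [set y | ucovers x y] by rewrite ha set11.
  by rewrite inE.
have [ax _] := ucoversP xa.
have aS : a \notin S.
  by rewrite inE; apply/negP => /andP[xa' _]; have := lt_le_trans ax xa'; rewrite ltxx.
have up : forall v, v \notin S -> x <= v -> y0 <= v.
  by move=> v vS xv; apply/negPn; apply: contra vS => h; rewrite inE xv h.
have ySn : y0 \notin S by rewrite inE lexx andbF.
have [z0|nz] := eqVneq #|[set y | ucovers y y0]| 0%N.
  have ytop : forall w, w <= y0.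
    move=> w; case: (eqVneq (w `|` y0) y0) => [e|ne]; first by rewrite -e leUl.
    have lt : y0 < w `|` y0 by rewrite lt_neqAle eq_sym ne leUr.
    have [c [hc _]] := cover_up lt.
    by move/eqP: z0; rewrite cards_eq0 => /eqP/setP/(_ c); rewrite inE in_set0 hc.
  have [c [yc xc]] := cover_down xy0.
  have [cy _] := ucoversP yc.
  have ycn : ~~ (y0 <= c) by rewrite lt_geF.
  have cS : c \in S by rewrite inE xc ycn.
  have sc : forall s, s \in S -> s <= c.
    move=> s sS; have sy := C s sS; move: (sS); rewrite inE => /andP[xs _].
    have wS : s `&` c \in S.
      rewrite inE lexI xs xc /=; apply/negP => h; move/negP: ycn; apply.
      exact: le_trans h (leIr _ _).
    case: (eqVneq (s `&` c) s) => [e|ne]; first by rewrite -e leIr.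
    case: (eqVneq (s `&` c) c) => [e|ne2].
      have cs : c <= s by rewrite -e leIl.
      have [->|e2] := cover_cases yc cs (ltW sy); first by [].
      by move: sy; rewrite e2 ltxx.
    have lt1 : s `&` c < s by rewrite lt_neqAle ne leIl.
    have lt2 : s `&` c < c by rewrite lt_neqAle ne2 leIr.
    by have := meet_irr_lt (B _ wS) lt1 lt2; rewrite ltxx.
  have [j [jn _ minj]] := @minimal d L (fun z : L => ~~ (z <= c)) y0 ycn.
  have lowc : forall u, ucovers j u -> u <= c.
    by move=> u /ucoversP[uj _]; have := minj u uj; rewrite negbK.
  have ac : a <= c := le_trans (ltW ax) xc.
  have jac : j `&` a < j.
    rewrite lt_neqAle leIl andbT; apply/eqP => e; move/negP: jn; apply.
    by apply: le_trans ac; rewrite -e leIr.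
  have [c1 [hc1 _]] := cover_down jac.
  have jj : join_irr j.
    apply/cards1P; exists c1; apply/setP => u; rewrite !inE; apply/idP/eqP => [hu|->//].
    have u1 := lowc u hu; have c11 := lowc c1 hc1.
    have [uj _] := ucoversP hu; have [c1j _] := ucoversP hc1.
    have ucj : u `|` c1 <= j by rewrite leUx (ltW uj) (ltW c1j).
    have cuj : c1 `|` u <= j by rewrite leUx (ltW uj) (ltW c1j).
    have [e|e] := cover_cases hu (leUl u c1) ucj.
      have [e'|e'] := cover_cases hc1 (leUl c1 u) cuj.
        by apply/le_anti/andP; split; [rewrite -e' leUr | rewrite -e leUr].
      by exfalso; move/negP: jn; apply; rewrite -e' leUx u1 c11.
    by exfalso; move/negP: jn; apply; rewrite -e leUx u1 c11.
  have HJ := Hcex j jj; have HX := Hcex x jx.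
  pose D := a |: (upset x :\ y0).
  have sub : upset j \subset ~: D.
    apply/subsetP => w; rewrite !inE => jw; apply/negP => /orP[/eqP ew|/andP[wy xw]].
      by move/negP: jn; apply; rewrite ew in jw; exact: le_trans jw ac.
    have wS : w \in S.
      rewrite inE xw /=; apply/negP => yw; move/negP: wy; apply.
      by apply/eqP/le_anti; rewrite yw ytop.
    by move/negP: jn; apply; exact: le_trans jw (sc _ wS).
  have c1' := subset_leq_card sub.
  have c2 := cardsC D.
  have c3 : #|D| = #|upset x|.
    rewrite cardsU1 [#|upset x|](cardsD1 y0) !inE.
    by rewrite (lt_geF ax) andbF (ltW xy0).

  have c2' : (#|D| + #|~: D| = #|L|)%N := c2.
  clear -HJ HX c1' c2' c3; lia.
have mr : meet_red y0.
  rewrite /meet_red; move: ny0 nz; rewrite /meet_irr.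
  by case: #|_| => [|[|k]].
have njr : ~~ join_red y0.
  by have := H' y0 xy0; rewrite /doubly_red mr andbT.
have jy0 : join_irr y0.
  have [c [yc _]] := cover_down xy0.
  have : (0 < #|[set y | ucovers y0 y]|)%N by apply/card_gt0P; exists c; rewrite inE.
  move: njr; rewrite /join_red /join_irr.
  by case: #|_| => [|[|k]].
have Hm : forall u v, u \notin S -> v \notin S -> u `&` v \notin S.
  move=> u v uS vS; apply/negP; rewrite inE lexI => /andP[/andP[xu xv] h].
  by move/negP: h; apply; rewrite lexI (up u uS xu) (up v vS xv).
have Hj' : forall s, s \in S -> s <= y0 /\ (forall w, w \notin S -> s <= w -> y0 <= w).
  move=> s sS; split; first exact: ltW (C s sS).
  move=> w wS sw; apply: up wS _; move: sS; rewrite inE => /andP[xs _].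
  exact: le_trans xs sw.
pose L' := (@ST d L S y0 Hm ySn Hj' : finLatticeType d).
have HY := Hcex y0 jy0.
have cex : counterexample L'.
  split.
    rewrite card_ST.
    have ay : a != y0 by rewrite lt_eqF // (lt_trans ax xy0).
    have sub2 : [set y0; a] \subset [set w | w \notin S].
      by apply/subsetP => w /set2P[->|->]; rewrite inE.
    have := subset_leq_card sub2; rewrite cards2 eq_sym ay.
    done.
  move=> j' jj'.
  rewrite card_ST upset_ST.
  have cle : (#|[set w : L | w \notin S]| <= #|L|)%N by apply: max_card.
  have vS : val j' \notin S := valP j'.
  case: (boolP (val j' <= y0)) => hj.
    have sub : upset y0 \subset [set w : L | (val j' <= w) && (w \notin S)].
      apply/subsetP => w; rewrite !inE => yw; rewrite (le_trans hj yw) /=.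
      by rewrite yw andbF.
    have := subset_leq_card sub.
    move: HY cle; set A1 := #|upset y0|; set A2 := #|[set w : L | (val j' <= w) && (w \notin S)]|; set N0 := #|L|; set N1 := #|[set w : L | w \notin S]|; clear; lia.
  have gt : forall u, u \in S -> val j' <= u -> False.
    by move=> u uS ju; move/negP: hj; apply; exact: le_trans ju (ltW (C u uS)).
  have lt0 : forall u, u \in S -> val j' <= u -> False := gt.
  have yj : forall z, z \in S -> z <= val j' -> y0 < val j'.
    move=> z zS zj; move: (zS); rewrite inE => /andP[xz _].
    have yj' := up _ vS (le_trans xz zj).
    rewrite lt_neqAle yj' andbT; apply/eqP => e; move/negP: hj; apply.
    by rewrite -e.
  have J : join_irr (val j').
    apply: (join_irr_val _ _ jj').
      move=> u /ucoversP[uj hb]; apply/negP => uS.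
      exact: hb y0 (C u uS) (yj u uS (ltW uj)).
    move=> u /ucoversP[uj hb]; apply: ucoversI; first by rewrite -ltEsub.
    move=> z uz zj; case: (boolP (z \in S)) => zS.
      apply: (hb (exist _ y0 ySn)); rewrite ltEsub /=.
        exact: lt_trans uz (C z zS).
      exact: yj z zS (ltW zj).
    by apply: (hb (exist _ z zS)); rewrite ltEsub.
  have := Hcex _ J.
  have -> : [set w : L | (val j' <= w) && (w \notin S)] = upset (val j').
    apply/setP => w; rewrite !inE; case: (boolP (val j' <= w)) => // jw /=.
    by apply/negP => wS; apply: (gt w _ jw); rewrite inE.
  move: cle; set A1 := #|upset (val j')|; set N0 := #|L|; set N1 := #|[set w : L | w \notin S]|; clear; lia.
have := Hmin _ L' cex.
rewrite card_ST.
have cc := cardsC S.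
have xS : x \in S by rewrite inE lexx /= lt_geF.
have : (0 < #|S|)%N by apply/card_gt0P; exists x.
have e : [set w | w \notin S] = ~: S by apply/setP => w; rewrite !inE.
rewrite e.
have cc' : (#|S| + #|~: S| = #|L|)%N := cc.
clear -cc'; lia.
Qed.
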